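(* Let $X$ be a topological space possessing an infinite metrizable gauge, and let $\kappa$ be a regular cardinal with $\kappa\in\mathrm{MG}(X)$. Then the following are equivalent: (1) $X$ is finally $\kappa$-compact; (2) there exists $G\in\mathcal{G}_\kappa$ such that $(X,d)$ is complete for all $d\in\mathrm{Met}(X;G)$; (3) for all $G\in\mathcal{G}_\kappa$ and all $d\in\mathrm{Met}(X;G)$, $(X,d)$ is complete; (4) there exists $S\in\mathcal{F}_\kappa$ such that $(X,d)$ is complete for all $d\in\mathrm{Ult}(X;S)$; (5) for all $S\in\mathcal{F}_\kappa$ and all $d\in\mathrm{Ult}(X;S)$, $(X,d)$ is complete.
   Context: A linearly ordered Abelian group is an Abelian group $G$ with a linear order compatible with addition; $G_{>0}$, $G_{\ge0}$ as usual. For $x,y\in G_{>0}$, $x\asymp y$ iff $y\le nx$ and $x\le my$ for some $n,m\in\mathbb{Z}_{\ge1}$; $\mathrm{Arc}(G)=G_{>0}/\asymp$, ordered by $[x]\preceq[y]$ iff ($nx<y$ for all $n\ge 1$) or $x\asymp y$. $L^{\perp}$ is a linearly ordered set $L$ with a new least element adjoined. A bottomed linearly ordered set $S$ has a least element $\perp_S$; $S^*=S\setminus\{\perp_S\}$. The character $\chi(S)$ is the least cardinal $\kappa>0$ such that some strictly decreasing family $(s_\alpha)_{\alpha<\kappa}$ in $S^*$ has every $t\in S^*$ bounded below by some $s_\alpha$. A $G$-metric on a set $X$: $d\colon X\times X\to G$, $d(x,y)=0\iff x=y$, $d\ge0$, symmetric, triangle inequality. An $S$-ultrametric: $d\colon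 X\times X\to S$, $d(x,y)=\perp_S\iff x=y$, symmetric, $d(x,y)\le\max\{d(x,z),d(z,y)\}$. Topologies are generated by open balls of radius $\epsilon\in G_{>0}$ (resp. $\epsilon\in S^*$); $\mathrm{Met}(X;G)$ (resp. $\mathrm{Ult}(X;S)$) denotes those generating the given topology of $X$. $\kappa$ is a metrizable gauge of $X$ if some $G$ with $\chi(\mathrm{Arc}(G)^\perp)=\kappa$ has $\mathrm{Met}(X;G)\ne\emptyset$; $\mathrm{MG}(X)$ is the class of these; ''possesses an infinite metrizable gauge'' means some $\kappa\in\mathrm{MG}(X)$ is $\ge\omega_0$. $\mathcal{G}_\kappa$: linearly ordered Abelian groups $G$ with $\chi(\mathrm{Arc}(G)^\perp)=\kappa$; $\mathcal{F}_\kappa$: bottomed linearly ordered sets $S$ with $\chi(S)=\kappa$. A filter $\mathcal F$ is Cauchy for $d$ if for every $\epsilon\in G_{>0}$ (resp. $S^*$) some $F\in\mathcal F$ has $d(x,y)<\epsilon$ for all $x,y\in F$; $(X,d)$ is complete if every Cauchy filter converges. $X$ is finally $\kappa$-compact if every open cover has a subcover of cardinality $<\kappa$. *)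

(* Defs.v *)
From HB Require Import structures.
From mathcomp Require Import all_boot all_order.
From mathcomp Require Import all_classical topology.

Set Implicit Arguments.
Unset Strict Implicit.
Unset Printing Implicit Defensive.

Local Open Scope classical_set_scope.

Definition card_le (A B : Type) : Prop :=
  exists f : A -> B, forall x y, f x = f y -> x = y.

Definition card_lt (A B : Type) : Prop := card_le A B /\ ~ card_le B A.

Definition finite_type (A : Type) : Prop :=
  exists (n : nat) (f : A -> nat),
    (forall x y, f x = f y -> x = y) /\ (forall x, (f x < n)%N).

(* A cardinal, represented (von Neumann style) by an initial ordinal:
   a strict well-order all of whose proper initial segments have
   strictly smaller cardinality. *)
Record cardinal := Cardinal {
  ord_car :> Type;
  ord_lt : ord_car -> ord_car -> Prop;
  ord_wf : well_founded ord_lt;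
  ord_trans : forall a b c, ord_lt a b -> ord_lt b c -> ord_lt a c;
  ord_total : forall a b, ord_lt a b \/ a = b \/ ord_lt b a;
  ord_initial : forall a, card_lt {b : ord_car | ord_lt b a} ord_car
}.

Definition infinite_card (K : cardinal) : Prop := ~ finite_type K.

Definition regular_card (K : cardinal) : Prop :=
  infinite_card K /\
  forall A : K -> Prop,
    (forall a : K, exists b, A b /\ (ord_lt a b \/ a = b)) ->
    card_le K {b : K | A b}.

Definition coinitial_decr_family (S : Type) (lt : S -> S -> Prop) (bot : S)
    (L : cardinal) (s : L -> S) : Prop :=
  (forall a, s a <> bot) /\
  (forall a b : L, ord_lt a b -> lt (s b) (s a)) /\
  (forall t, t <> bot -> exists a, lt (s a) t \/ s a = t).

Definition has_character (S : Type) (lt : S -> S -> Prop) (bot : S)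
    (K : cardinal) : Prop :=
  inhabited K /\
  (exists s : K -> S, coinitial_decr_family lt bot s) /\
  (forall L : cardinal, inhabited L -> card_lt L K ->
     ~ exists s : L -> S, coinitial_decr_family lt bot s).

Record bls := BLS {
  bs_car :> Type;
  bs_lt : bs_car -> bs_car -> Prop;
  bs_bot : bs_car;
  bs_irr : forall a, ~ bs_lt a a;
  bs_trans : forall a b c, bs_lt a b -> bs_lt b c -> bs_lt a c;
  bs_total : forall a b, bs_lt a b \/ a = b \/ bs_lt b a;
  bs_least : forall a, bs_lt (bs_bot) a \/ bs_bot = a
}.

Definition bs_le (S : bls) (a b : S) : Prop := bs_lt a b \/ a = b.

Record loag := LOAG {
  lg_car :> Type;
  lg_zero : lg_car;
  lg_add : lg_car -> lg_car -> lg_car;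
  lg_opp : lg_car -> lg_car;
  lg_lt : lg_car -> lg_car -> Prop;
  lg_addA : forall x y z, lg_add x (lg_add y z) = lg_add (lg_add x y) z;
  lg_addC : forall x y, lg_add x y = lg_add y x;
  lg_add0 : forall x, lg_add lg_zero x = x;
  lg_addN : forall x, lg_add (lg_opp x) x = lg_zero;
  lg_irr : forall a, ~ lg_lt a a;
  lg_trans : forall a b c, lg_lt a b -> lg_lt b c -> lg_lt a c;
  lg_total : forall a b, lg_lt a b \/ a = b \/ lg_lt b a;
  lg_le_add : forall x y z, (lg_lt x y \/ x = y) ->
                (lg_lt (lg_add x z) (lg_add y z) \/ lg_add x z = lg_add y z)
}.

Definition lg_le (G : loag) (x y : G) : Prop := lg_lt x y \/ x = y.

Fixpoint lg_nmul (G : loag) (n : nat) (x : G) : G :=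
  match n with
  | O => lg_zero G
  | S n' => lg_add x (lg_nmul n' x)
  end.

Definition lg_asymp (G : loag) (x y : G) : Prop :=
  exists n m : nat, (1 <= n)%N /\ (1 <= m)%N /\
    lg_le y (lg_nmul n x) /\ lg_le x (lg_nmul m y).

(* Arc(G) = G_{>0}/≍ : elements are the equivalence classes *)
Definition arc (G : loag) : Type :=
  { P : G -> Prop | exists x, lg_lt (lg_zero G) x /\
      forall y, P y <-> (lg_lt (lg_zero G) y /\ lg_asymp x y) }.

Definition arc_lt (G : loag) (P Q : arc G) : Prop :=
  exists x y, proj1_sig P x /\ proj1_sig Q y /\
    forall n, (1 <= n)%N -> lg_lt (lg_nmul n x) y.

Definition arcb_lt (G : loag) (a b : option (arc G)) : Prop :=
  match a, b with
  | None, Some _ => True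
  | Some P, Some Q => arc_lt P Q
  | _, _ => False
  end.

Definition in_G_kappa (G : loag) (K : cardinal) : Prop :=
  has_character (@arcb_lt G) None K.

Definition in_F_kappa (S : bls) (K : cardinal) : Prop :=
  has_character (@bs_lt S) (bs_bot S) K.

Section Metrics.
Variable X : topologicalType.

Definition is_Gmetric (G : loag) (d : X -> X -> G) : Prop :=
  (forall x y, d x y = lg_zero G <-> x = y) /\
  (forall x y, lg_le (lg_zero G) (d x y)) /\
  (forall x y, d x y = d y x) /\
  (forall x y z, lg_le (d x y) (lg_add (d x z) (d z y))).

Definition Gmetric_open (G : loag) (d : X -> X -> G) (U : set X) : Prop :=
  forall x, U x -> exists (c : X) (e : G), lg_lt (lg_zero G) e /\
    lg_lt (d c x) e /\ (forall y, lg_lt (d c y) e -> U y).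

Definition in_Met (G : loag) (d : X -> X -> G) : Prop :=
  is_Gmetric d /\ (forall U : set X, open U <-> Gmetric_open d U).

(* max{a,b} in a linear order: c <= max{a,b} iff c <= a or c <= b *)
Definition is_ultrametric (S : bls) (d : X -> X -> S) : Prop :=
  (forall x y, d x y = bs_bot S <-> x = y) /\
  (forall x y, d x y = d y x) /\
  (forall x y z, bs_le (d x y) (d x z) \/ bs_le (d x y) (d z y)).

Definition ultra_open (S : bls) (d : X -> X -> S) (U : set X) : Prop :=
  forall x, U x -> exists (c : X) (e : S), e <> bs_bot S /\
    bs_lt (d c x) e /\ (forall y, bs_lt (d c y) e -> U y).

Definition in_Ult (S : bls) (d : X -> X -> S) : Prop :=
  is_ultrametric d /\ (forall U : set X, open U <-> ultra_open d U).

Definition Gcauchy (G : loag) (d : X -> X -> G) (F : set_system X) : Prop :=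
  forall e : G, lg_lt (lg_zero G) e ->
    exists A, F A /\ forall x y, A x -> A y -> lg_lt (d x y) e.

Definition Gcomplete (G : loag) (d : X -> X -> G) : Prop :=
  forall F : set_system X, ProperFilter F -> Gcauchy d F ->
    exists x : X, F --> x.

Definition ucauchy (S : bls) (d : X -> X -> S) (F : set_system X) : Prop :=
  forall e : S, e <> bs_bot S ->
    exists A, F A /\ forall x y, A x -> A y -> bs_lt (d x y) e.

Definition ucomplete (S : bls) (d : X -> X -> S) : Prop :=
  forall F : set_system X, ProperFilter F -> ucauchy d F ->
    exists x : X, F --> x.

Definition in_MG (K : cardinal) : Prop :=
  exists G : loag, in_G_kappa G K /\ exists d : X -> X -> G, in_Met d.

Definition has_infinite_gauge : Prop :=
  exists K : cardinal, infinite_card K /\ in_MG K.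

Definition finally_compact (K : cardinal) : Prop :=
  forall C : set (set X),
    (forall U, C U -> open U) -> (forall x, exists U, C U /\ U x) ->
    exists D : set (set X), D `<=` C /\ (forall x, exists U, D U /\ U x) /\
      card_lt {U : set X | D U} K.

End Metrics.

(* Main.v *)
Require Import Defs.
From HB Require Import structures.
From mathcomp Require Import all_boot all_order.
From mathcomp Require Import all_classical topology.
From Stdlib Require Import Classical ProofIrrelevance.

Set Implicit Arguments.
Unset Strict Implicit.
Unset Printing Implicit Defensive.
Local Open Scope classical_set_scope.

Section Kfacts.
Variable K : cardinal.
Definition kle (a b : K) := ord_lt a b \/ a = b.

Lemma k_irr (a : K) : ~ ord_lt a a.
Proof.
have := @ord_wf K a. elim => x _ IH H. exact: (IH x H H).
Qed.

Lemma k_asym (a b : K) : ord_lt a b -> ~ ord_lt b a.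
Proof. move=> H1 H2; apply: (k_irr (ord_trans H1 H2)). Qed.

Lemma k_lt_le_trans (a b c : K) : ord_lt a b -> kle b c -> ord_lt a c.
Proof. move=> H [H'|<-] //; exact: ord_trans H H'. Qed.

Lemma k_le_lt_trans (a b c : K) : kle a b -> ord_lt b c -> ord_lt a c.
Proof. move=> [H'|->] H //; exact: ord_trans H' H. Qed.

Lemma k_le_trans (a b c : K) : kle a b -> kle b c -> kle a c.
Proof.
move=> [H|->] H2 //; left; exact: k_lt_le_trans H H2.
Qed.

Lemma k_not_lt (a b : K) : ~ ord_lt a b -> kle b a.
Proof. move=> H. case: (ord_total a b) => [//|[->|H2]]; [right|left] => //. Qed.

Lemma k_max2 (a b : K) : exists c, kle a c /\ kle b c.
Proof.
case: (ord_total a b) => [H|[->|H]].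
- exists b; split; [left|right] => //.
- exists b; split; right => //.
- exists a; split; [right|left] => //.
Qed.

Lemma k_inhabited : infinite_card K -> inhabited K.
Proof.
move=> HK. apply: NNPP => Hn. apply: HK.
exists 0%N, (fun x => match Hn (inhabits x) with end).
split=> x; case: (Hn (inhabits x)).
Qed.

Lemma k_nomax : regular_card K -> forall a : K, exists b, ord_lt a b.
Proof.
move=> [Hinf Hreg] a. apply: NNPP => Hn.
have Hc : forall a' : K, exists b, (fun b => b = a) b /\ (ord_lt a' b \/ a' = b).
  move=> a'; exists a; split=> //.
  case: (ord_total a' a) => [H|[->|H]]; [left|right|] => //.
  by case: Hn; exists a'.
have [f finj] := Hreg _ Hc.
apply: Hinf. exists 1%N, (fun _ => 0%N). split => // x y _.
apply: finj. case: (f x) => [v pv]; case: (f y) => [w pw].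
move: pv pw; move=> pv pw. subst v w. f_equal; try exact: proof_irrelevance.
Qed.

End Kfacts.
Section Grp.
Variable G : loag.
Local Notation "a +g b" := (lg_add a b) (at level 50, left associativity).
Local Notation z := (lg_zero G).
Implicit Types a b c d e : G.

Lemma gle_refl a : lg_le a a. Proof. by right. Qed.
Lemma glt_asym a b : lg_lt a b -> ~ lg_lt b a.
Proof. move=> H1 H2; exact: (lg_irr (lg_trans H1 H2)). Qed.
Lemma gle_trans a b c : lg_le a b -> lg_le b c -> lg_le a c.
Proof. move=> [H|->] [H'|<-]; rewrite /lg_le; auto. left; exact: lg_trans H H'. Qed.
Lemma glt_le_trans a b c : lg_lt a b -> lg_le b c -> lg_lt a c.
Proof. move=> H [H'|<-] //; exact: lg_trans H H'. Qed.
Lemma gle_lt_trans a b c : lg_le a b -> lg_lt b c -> lg_lt a c.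
Proof. move=> [H'|->] H //; exact: lg_trans H' H. Qed.
Lemma gnot_lt a b : ~ lg_lt a b -> lg_le b a.
Proof. move=> H. case: (lg_total a b) => [//|[->|H2]]; [right|left] => //. Qed.
Lemma glt_not_le a b : lg_lt a b -> ~ lg_le b a.
Proof. move=> H [H'|E]. exact: glt_asym H H'. subst; exact: lg_irr H. Qed.
Lemma glt_total a b : lg_lt a b \/ lg_le b a.
Proof. case: (lg_total a b) => [H|[->|H]]; [left|right;right|right;left] => //. Qed.

Lemma gaddr0 a : a +g z = a. Proof. by rewrite lg_addC lg_add0. Qed.
Lemma gaddrN a : a +g lg_opp a = z. Proof. by rewrite lg_addC lg_addN. Qed.
Lemma gaddK a c : (a +g c) +g lg_opp c = a.
Proof. by rewrite -lg_addA gaddrN gaddr0. Qed.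
Lemma gadd_inj a b c : a +g c = b +g c -> a = b.
Proof. move=> H. by rewrite -(gaddK a c) H gaddK. Qed.
Lemma gle_add_r a b c : lg_le a b -> lg_le (a +g c) (b +g c).
Proof. exact: lg_le_add. Qed.
Lemma gle_add_l a b c : lg_le a b -> lg_le (c +g a) (c +g b).
Proof. rewrite (lg_addC c a) (lg_addC c b). exact: lg_le_add. Qed.
Lemma glt_add_r a b c : lg_lt a b -> lg_lt (a +g c) (b +g c).
Proof.
move=> H. case: (lg_le_add c (or_introl H)) => // E.
have := gadd_inj E => E'. subst; case: (lg_irr H).
Qed.
Lemma glt_add_l a b c : lg_lt a b -> lg_lt (c +g a) (c +g b).
Proof. rewrite (lg_addC c a) (lg_addC c b). exact: glt_add_r. Qed.
Lemma gle_add2 a b c d : lg_le a b -> lg_le c d -> lg_le (a +g c) (b +g d).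
Proof. move=> H1 H2. apply: gle_trans (gle_add_r c H1) (gle_add_l b H2). Qed.
Lemma glt_le_add2 a b c d : lg_lt a b -> lg_le c d -> lg_lt (a +g c) (b +g d).
Proof. move=> H1 H2. apply: glt_le_trans (glt_add_r c H1) (gle_add_l b H2). Qed.
Lemma gle_lt_add2 a b c d : lg_le a b -> lg_lt c d -> lg_lt (a +g c) (b +g d).
Proof. move=> H1 H2. apply: gle_lt_trans (gle_add_r c H1) (glt_add_l b H2). Qed.
Lemma gle_addr_nonneg a b : lg_le z b -> lg_le a (a +g b).
Proof. move=> H. have := gle_add_l a H. by rewrite gaddr0. Qed.
Lemma gle_addl_nonneg a b : lg_le z b -> lg_le a (b +g a).
Proof. rewrite lg_addC. exact: gle_addr_nonneg. Qed.
Lemma gle0_add a b : lg_le z a -> lg_le z b -> lg_le z (a +g b).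
Proof. move=> H1 H2. have := gle_add2 H1 H2. by rewrite lg_add0. Qed.

Lemma nmul0 n : lg_nmul n z = z.
Proof. elim: n => //= n ->. exact: lg_add0. Qed.
Lemma nmul1 a : lg_nmul 1 a = a.
Proof. exact: gaddr0. Qed.
Lemma nmulD n m a : lg_nmul (n + m) a = lg_nmul n a +g lg_nmul m a.
Proof.
elim: n => [|n IH]; first by rewrite add0n /= lg_add0.
by rewrite addSn /= IH lg_addA.
Qed.
Lemma nmulM n m a : lg_nmul (n * m) a = lg_nmul n (lg_nmul m a).
Proof. elim: n => [|n IH] //. by rewrite mulSn nmulD IH. Qed.
Lemma nmul_add n a b : lg_nmul n (a +g b) = lg_nmul n a +g lg_nmul n b.
Proof.
elim: n => [|n IH] /=; first by rewrite lg_add0.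
rewrite IH. rewrite -!lg_addA. f_equal. rewrite !lg_addA. f_equal. exact: lg_addC.
Qed.
Lemma nmul_le n a b : lg_le a b -> lg_le (lg_nmul n a) (lg_nmul n b).
Proof. move=> H; elim: n => [|n IH] /=; first exact: gle_refl. exact: gle_add2. Qed.
Lemma nmul_lt n a b : (1 <= n)%N -> lg_lt a b -> lg_lt (lg_nmul n a) (lg_nmul n b).
Proof.
case: n => // n _ H. elim: n => [|n IH]; first by rewrite !nmul1.
rewrite /=. apply: glt_le_add2 => //. left; exact: IH.
Qed.
Lemma nmul_lt_inv n a b : lg_lt (lg_nmul n a) (lg_nmul n b) -> lg_lt a b.
Proof.
move=> H. case: (glt_total a b) => // H'. have := nmul_le n H'.
move/glt_not_le: H. done.
Qed.
Lemma nmul_nonneg n a : lg_le z a -> lg_le z (lg_nmul n a).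
Proof. move=> H. have := nmul_le n H. by rewrite nmul0. Qed.
Lemma nmul_pos n a : (1 <= n)%N -> lg_lt z a -> lg_lt z (lg_nmul n a).
Proof. move=> Hn H. have := nmul_lt Hn H. by rewrite nmul0. Qed.

Lemma asymp_refl a : lg_asymp a a.
Proof. exists 1%N, 1%N; rewrite nmul1; split; [done|split; [done|split; exact: gle_refl]]. Qed.
Lemma asymp_sym a b : lg_asymp a b -> lg_asymp b a.
Proof. move=> [n [m [? [? [? ?]]]]]; by exists m, n. Qed.
Lemma asymp_trans a b c : lg_asymp a b -> lg_asymp b c -> lg_asymp a c.
Proof.
move=> [n [m [n1 [m1 [H1 H2]]]]] [n' [m' [n1' [m1' [H1' H2']]]]].
exists (n' * n)%N, (m * m')%N; split; first by rewrite muln_gt0 n1 n1'.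
split; first by rewrite muln_gt0 m1 m1'.
split.
- rewrite nmulM. apply: gle_trans H1' (nmul_le _ H1).
- rewrite nmulM. apply: gle_trans H2 (nmul_le _ H2').
Qed.

Lemma arc_pos (P : Defs.arc G) a : proj1_sig P a -> lg_lt z a.
Proof. case: P => P [x [_ HP]] /= /HP [] //. Qed.
Lemma arc_asymp (P : Defs.arc G) a b : proj1_sig P a -> proj1_sig P b -> lg_asymp a b.
Proof.
case: P => P [x [_ HP]] /= /HP [_ Ha] /HP [_ Hb].
exact: asymp_trans (asymp_sym Ha) Hb.
Qed.

Lemma arc_lt_mul (P Q : Defs.arc G) a b : arc_lt P Q -> proj1_sig P a -> proj1_sig Q b ->
  forall n, (1 <= n)%N -> lg_lt (lg_nmul n a) b.
Proof.
move=> [x [y [Px [Qy Hxy]]]] Pa Qb n n1.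
have [_ [m [_ [m1 [_ Ham]]]]] := arc_asymp Pa Px.
have [m' [_ [m1' [_ [Hyb _]]]]] := arc_asymp Qb Qy.
apply: (@nmul_lt_inv m'). 
have h1 : lg_le (lg_nmul m' (lg_nmul n a)) (lg_nmul (m' * n * m) x).
  rewrite -nmulM (nmulM (m' * n) m x). exact: nmul_le.
apply: gle_lt_trans h1 _. apply: glt_le_trans _ Hyb.
apply: Hxy. by rewrite !muln_gt0 m1 m1' n1.
Qed.

Definition mk_arc e (he : lg_lt z e) : Defs.arc G :=
  exist (fun P : G -> Prop => exists x, lg_lt z x /\
      forall y, P y <-> (lg_lt z y /\ lg_asymp x y))
    (fun y => lg_lt z y /\ lg_asymp e y)
    (ex_intro _ e (conj he (fun y => iff_refl _))).

Lemma mk_arc_mem e (he : lg_lt z e) : proj1_sig (mk_arc he) e.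
Proof. split => //; exact: asymp_refl. Qed.

End Grp.
Lemma card_le_trans (A B C : Type) : Defs.card_le A B -> Defs.card_le B C -> Defs.card_le A C.
Proof.
move=> [f fi] [g gi]; exists (fun x => g (f x)) => x y H. exact: fi (gi _ _ H).
Qed.

Lemma sig_eqP (T : Type) (P : T -> Prop) (u v : {x | P x}) :
  proj1_sig u = proj1_sig v -> u = v.
Proof.
case: u => x px; case: v => y py /= E. subst y. f_equal. exact: Prop_irrelevance.
Qed.

Record lvl (X : topologicalType) (K : cardinal) (cl : K -> X -> X -> Prop) : Prop := Lvl {
  lv_refl : forall a x, cl a x x;
  lv_sym : forall a x y, cl a x y -> cl a y x;
  lv_trans : forall a x y z, cl a x y -> cl a y z -> cl a x z;
  lv_mono : forall a b x y, ord_lt a b -> cl b x y -> cl a x y;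
  lv_sep : forall x y, x <> y -> exists a, ~ cl a x y;
  lv_top : forall U : set X, open U <-> (forall x, U x -> exists a, forall y, cl a x y -> U y)
}.

Section LvlFacts.
Variables (X : topologicalType) (K : cardinal) (cl : K -> X -> X -> Prop).
Hypothesis Hl : lvl cl.

Lemma lv_mono_le a b x y : kle a b -> cl b x y -> cl a x y.
Proof. case=> [H|->] Hc; [exact (lv_mono Hl H Hc)|exact: Hc]. Qed.

Lemma lv_ball_open a x : open [set y | cl a x y].
Proof.
apply/(lv_top Hl) => y Hy. exists a => w Hw. exact (lv_trans Hl Hy Hw).
Qed.

Lemma lv_nbhs x (A : set X) : nbhs x A -> exists a, forall y, cl a x y -> A y.
Proof.
rewrite nbhsE => -[B [oB Bx] BA].
have [a Ha] := (proj1 (lv_top Hl B) oB) x Bx.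
exists a => y Hy; exact: BA (Ha y Hy).
Qed.

Lemma complete_lvl : regular_card K -> finally_compact X K ->
  forall F : set_system X, ProperFilter F ->
  (forall a, exists A, F A /\ forall x y, A x -> A y -> cl a x y) ->
  exists x : X, F --> x.
Proof.
move=> HK Hfc F PF Hc. apply: NNPP => Hn.
have Hb : forall x, exists a, ~ F [set y | cl a x y].
  move=> x. apply: NNPP => H. apply: Hn. exists x => A /lv_nbhs [a Ha].
  apply: (filterS Ha). apply: NNPP => H'. apply: H. by exists a.
pose ax x := proj1_sig (cid (Hb x)).
have axP x : ~ F [set y | cl (ax x) x y] := proj2_sig (cid (Hb x)).
pose C := fun V : set X => exists x, V = [set y | cl (ax x) x y].
have [D [DC [Dcov Dcard]]] : exists D : set (set X), D `<=` C /\ (forall x, exists U, D U /\ U x) /\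
      Defs.card_lt {U : set X | D U} K.
  apply: Hfc.
  - move=> U [x ->]; exact: lv_ball_open.
  - move=> x; exists [set y | cl (ax x) x y]; split; first by exists x.
    exact (lv_refl Hl _ _).
pose xU (u : {U | D U}) := proj1_sig (cid (DC _ (proj2_sig u))).
have xUP u : proj1_sig u = [set y | cl (ax (xU u)) (xU u) y] :=
  proj2_sig (cid (DC _ (proj2_sig u))).
pose Aset := fun b => exists u, b = ax (xU u).
have [a' Ha'] : exists a', forall b, Aset b -> ord_lt b a'.
  apply: NNPP => Hn2.
  have Hcof : forall a' : K, exists b, Aset b /\ (ord_lt a' b \/ a' = b).
    move=> a'. apply: NNPP => H1. apply: Hn2. exists a' => b Ab.
    case: (ord_total b a') => [//|[E|E]]; case: H1; exists b; split => //; [right|left] => //.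
  have H1 := (proj2 HK) _ Hcof.
  have H2 : Defs.card_le {b | Aset b} {U | D U}.
    exists (fun b : {b : K | Aset b} => proj1_sig (cid (proj2_sig b))) => b1 b2 E.
    apply: sig_eqP. rewrite (proj2_sig (cid (proj2_sig b1))) (proj2_sig (cid (proj2_sig b2))).
    by rewrite E.
  exact: (proj2 Dcard) (card_le_trans H1 H2).
have [B [FB HB]] := Hc a'.
have [y By] : exists y, B y.
  apply: NNPP => H. apply: (filter_not_empty F). apply: filterS FB => w Bw. apply: H. by exists w.
have [U [DU Uy]] := Dcov y.
pose u := exist _ U DU : {U | D U}.
have Hlt : ord_lt (ax (xU u)) a' by apply: Ha'; exists u.
apply: (axP (xU u)). apply: filterS FB => w Bw /=.
have := xUP u. rewrite /= => EU. rewrite EU in Uy.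
apply (lv_trans Hl Uy). apply (lv_mono Hl Hlt). exact: HB.
Qed.

End LvlFacts.
Lemma arc_elem (G : loag) (P : Defs.arc G) : exists x, proj1_sig P x.
Proof.
case: P => P [x [hx HP]] /=. exists x. apply/HP. split => //. exact: asymp_refl.
Qed.

Lemma G_family (K : cardinal) (G : loag) : regular_card K -> in_G_kappa G K ->
  exists g : K -> G, (forall a, lg_lt (lg_zero G) (g a)) /\
    (forall a b, ord_lt a b -> forall n, (1 <= n)%N -> lg_lt (lg_nmul n (g b)) (g a)) /\
    (forall e, lg_lt (lg_zero G) e -> exists a, forall n, (1 <= n)%N -> lg_lt (lg_nmul n (g a)) e).
Proof.
move=> HK [_ [[s [Hs0 [Hsdec Hscoi]]] _]].
have HP : forall a, exists P, s a = Some P.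
  move=> a. case E: (s a) => [P|]; first by exists P. by case: (Hs0 a).
pose P a := proj1_sig (cid (HP a)).
have PE a : s a = Some (P a) := proj2_sig (cid (HP a)).
pose g a := proj1_sig (cid (arc_elem (P a))).
have gP a : proj1_sig (P a) (g a) := proj2_sig (cid (arc_elem (P a))).
have Pdec : forall a b, ord_lt a b -> arc_lt (P b) (P a).
  move=> a b H. have := Hsdec a b H. by rewrite !PE.
exists g; split; [|split].
- move=> a; exact: arc_pos (gP a).
- move=> a b H n Hn. exact: arc_lt_mul (Pdec a b H) (gP b) (gP a) n Hn.
- move=> e he. have [a Ha] := Hscoi (Some (mk_arc he)) ltac:(by []).
  rewrite PE in Ha. case: Ha => [Ha|Ha].
  + exists a => n Hn. exact: arc_lt_mul Ha (gP a) (mk_arc_mem he) n Hn.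
  + case: Ha => Ha. have [b Hb] := k_nomax HK a. exists b => n Hn.
    apply: arc_lt_mul (Pdec a b Hb) (gP b) _ n Hn. rewrite Ha. exact: mk_arc_mem.
Qed.

Lemma S_family (K : cardinal) (S : bls) : in_F_kappa S K ->
  exists s : K -> S, (forall a, s a <> bs_bot S) /\
    (forall a b, ord_lt a b -> bs_lt (s b) (s a)) /\
    (forall t, t <> bs_bot S -> exists a, bs_le (s a) t).
Proof.
move=> [_ [[s [H1 [H2 H3]]] _]]. by exists s.
Qed.
Lemma nmul_sum_le (G : loag) n (a b : G) : lg_le a b ->
  lg_le (lg_add (lg_nmul n a) (lg_nmul n b)) (lg_nmul (n + n) b).
Proof. move=> H. rewrite nmulD. apply: gle_add_r. exact: nmul_le. Qed.

Lemma Gmet_lvl (X : topologicalType) (K : cardinal) (G : loag) (d : X -> X -> G) :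
  regular_card K -> in_G_kappa G K -> in_Met d ->
  exists cl : K -> X -> X -> Prop, lvl cl /\
    (forall a, exists e, lg_lt (lg_zero G) e /\ forall x y, lg_lt (d x y) e -> cl a x y).
Proof.
move=> HK HG [[d0 [dnn [dsym dtri]]] dtop].
have [g [gpos [gdec gcoi]]] := G_family HK HG.
pose cl a x y := forall n, (1 <= n)%N -> lg_lt (lg_nmul n (d x y)) (g a).
have small : forall a, exists e, lg_lt (lg_zero G) e /\ forall x y, lg_lt (d x y) e -> cl a x y.
  move=> a. have [b Hb] := k_nomax HK a. exists (g b); split => // x y H n Hn.
  exact (lg_trans (nmul_lt Hn H) (gdec a b Hb n Hn)).
exists cl; split => //.
constructor.
- move=> a x n Hn. rewrite (proj2 (d0 x x) erefl) nmul0. exact: gpos.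
- move=> a x y H n Hn. rewrite dsym. exact: H.
- move=> a x y z H1 H2 n Hn.
  apply: gle_lt_trans (nmul_le n (dtri x z y)) _. rewrite nmul_add.
  have Hnn : (1 <= n + n)%N by rewrite addn_gt0 Hn.
  case: (glt_total (d x y) (d y z)) => Hc.
  + apply: gle_lt_trans (nmul_sum_le n (or_introl Hc)) (H2 _ Hnn).
  + rewrite lg_addC. apply: gle_lt_trans (nmul_sum_le n Hc) (H1 _ Hnn).
- move=> a b x y Hab H n Hn. apply: lg_trans (H n Hn) _.
  have := gdec a b Hab 1%N erefl. by rewrite nmul1.
- move=> x y Hxy.
  have dpos : lg_lt (lg_zero G) (d x y).
    case: (dnn x y) => // E. case: Hxy. apply/d0. by rewrite E.
  have [a Ha] := gcoi _ dpos. exists a => H.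
  have := H 1%N erefl. have := Ha 1%N erefl. rewrite !nmul1. exact: glt_asym.
- move=> U. rewrite dtop. split.
  + move=> HU x Ux. have [c [e [he [hcx hball]]]] := HU x Ux.
    pose e' := lg_add e (lg_opp (d c x)).
    have he' : lg_lt (lg_zero G) e'.
      have := glt_add_r (lg_opp (d c x)) hcx. by rewrite gaddrN.
    have [a Ha] := gcoi _ he'. exists a => y Hy. apply: hball.
    apply: gle_lt_trans (dtri c y x) _.
    have Hxy : lg_lt (d x y) e'.
      have := Hy 1%N erefl; have := Ha 1%N erefl; rewrite !nmul1 => H1 H2. exact (lg_trans H2 H1).
    have := glt_add_l (d c x) Hxy. congr lg_lt.
    rewrite /e' lg_addC -lg_addA (lg_addC _ (d c x)) gaddrN. exact: gaddr0.
  + move=> HU x Ux. have [a Ha] := HU x Ux. have [e [he He]] := small a.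
    exists x, e; split => //; split.
    * by rewrite (proj2 (d0 x x) erefl).
    * move=> y Hy. apply: Ha. exact: He.
Qed.

Lemma bs_le_lt_trans (S : bls) (a b c : S) : bs_le a b -> bs_lt b c -> bs_lt a c.
Proof. move=> [H|->] H' //; exact: bs_trans H H'. Qed.
Lemma bs_lt_le_trans (S : bls) (a b c : S) : bs_lt a b -> bs_le b c -> bs_lt a c.
Proof. move=> H [H'|<-] //; exact: bs_trans H H'. Qed.
Lemma bs_asym (S : bls) (a b : S) : bs_lt a b -> ~ bs_lt b a.
Proof. move=> H1 H2; exact: (bs_irr (bs_trans H1 H2)). Qed.
Lemma bs_bot_lt (S : bls) (a : S) : a <> bs_bot S -> bs_lt (bs_bot S) a.
Proof. move=> H. case: (bs_least a) => // E. by case: H. Qed.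

Lemma ult_tri (X : topologicalType) (S : bls) (d : X -> X -> S) (e : S) x y z :
  is_ultrametric d -> bs_lt (d x y) e -> bs_lt (d y z) e -> bs_lt (d x z) e.
Proof.
move=> [d0 [dsym dult]] H1 H2. case: (dult x z y) => H.
- exact: bs_le_lt_trans H H1.
- exact: bs_le_lt_trans H H2.
Qed.

Lemma Ult_lvl (X : topologicalType) (K : cardinal) (S : bls) (d : X -> X -> S) :
  regular_card K -> in_F_kappa S K -> in_Ult d ->
  exists cl : K -> X -> X -> Prop, lvl cl /\
    (forall a, exists e, e <> bs_bot S /\ forall x y, bs_lt (d x y) e -> cl a x y).
Proof.
move=> HK HS [Hu dtop]. have Hu' := Hu. case: Hu' => [d0 [dsym dult]].
have [s [s0 [sdec scoi]]] := S_family HS.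
pose cl a x y := bs_lt (d x y) (s a).
exists cl; split; last first.
  move=> a. exists (s a); split => //.
constructor.
- move=> a x. rewrite /cl (proj2 (d0 x x) erefl). exact: bs_bot_lt.
- move=> a x y. by rewrite /cl dsym.
- move=> a x y z. exact: ult_tri.
- move=> a b x y Hab H. exact: bs_trans H (sdec a b Hab).
- move=> x y Hxy. have [a Ha] := scoi (d x y) (fun E => Hxy (proj1 (d0 x y) E)).
  exists a => H. have := bs_le_lt_trans Ha H. exact: bs_irr.
- move=> U. rewrite dtop. split.
  + move=> HU x Ux. have [c [e [he [hcx hball]]]] := HU x Ux.
    have [a Ha] := scoi e he. exists a => y Hy. apply: hball.
    apply: ult_tri Hu hcx _. exact: bs_lt_le_trans Hy Ha.
  + move=> HU x Ux. have [a Ha] := HU x Ux.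
    exists x, (s a); split => //; split.
    * rewrite (proj2 (d0 x x) erefl). exact: bs_bot_lt.
    * exact: Ha.
Qed.
Lemma wf_min (K : cardinal) (P : K -> Prop) : (exists a, P a) ->
  exists a, P a /\ forall b, P b -> ~ ord_lt b a.
Proof.
move=> [a Pa]. apply: NNPP => Hn.
have : forall x : K, ~ P x.
  move=> x. have := @ord_wf K x. elim => y _ IH Py. apply: Hn. exists y; split => //.
  move=> b Pb Hb. exact: IH b Hb Pb.
move=> H. exact: H a Pa.
Qed.

Section NotFC.
Variables (X : topologicalType) (K : cardinal) (cl : K -> X -> X -> Prop).
Hypothesis Hl : lvl cl.
Hypothesis HK : regular_card K.
Variable C : set (set X).
Hypothesis HCo : forall U, C U -> open U.
Hypothesis HCc : forall x, exists U, C U /\ U x.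
Hypothesis HCn : forall D : set (set X), D `<=` C -> (forall x, exists U, D U /\ U x) ->
  ~ Defs.card_lt {U : set X | D U} K.

Let L x a := exists U, C U /\ forall y, cl a x y -> U y.
Let Lne x : exists a, L x a.
Proof.
have [U [CU Ux]] := HCc x. have [a Ha] := (proj1 (lv_top Hl U) (HCo CU)) x Ux.
by exists a, U.
Qed.
Let axE x := cid (wf_min (Lne x)).
Let ax x := proj1_sig (axE x).
Let axL x : L x (ax x) := proj1 (proj2_sig (axE x)).
Let axM x b : L x b -> ~ ord_lt b (ax x) := proj2 (proj2_sig (axE x)) b.

Definition Rr x y := cl (ax x) x y.

Lemma Rr_ax x y : Rr x y -> ax y = ax x.
Proof.
move=> H.
have H1 : L y (ax x).
  have [U [CU HU]] := axL x. exists U; split => // z Hz. apply: HU.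
  exact (lv_trans Hl H Hz).
have H2 : ~ ord_lt (ax x) (ax y) := axM H1.
case: (ord_total (ax y) (ax x)) => [Hlt|[//|Hgt]]; last by case: H2.
exfalso. apply: (axM (x:=x) (b:=ax y)) => //.
have [U [CU HU]] := axL y. exists U; split => // z Hz. apply: HU.
apply (lv_trans Hl (y:=x)) => //. apply (lv_sym Hl). exact (lv_mono Hl Hlt H).
Qed.

Lemma Rr_refl x : Rr x x. Proof. exact (lv_refl Hl _ _). Qed.
Lemma Rr_sym x y : Rr x y -> Rr y x.
Proof. move=> H. rewrite /Rr (Rr_ax H). exact (lv_sym Hl H). Qed.
Lemma Rr_trans x y z : Rr x y -> Rr y z -> Rr x z.
Proof. move=> H1 H2. rewrite /Rr in H2. rewrite (Rr_ax H1) in H2. exact (lv_trans Hl H1 H2). Qed.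

Let pickE x := cid (axL x).
Let pickU x := proj1_sig (pickE x).
Let pickC x : C (pickU x) := proj1 (proj2_sig (pickE x)).
Let pickR x y : Rr x y -> pickU x y := proj2 (proj2_sig (pickE x)) y.

Lemma X_inh : exists x : X, True.
Proof.
apply: NNPP => H. apply: (HCn (D := set0)) => //.
- move=> x; case: H; by exists x.
- split.
  + exists (fun u : {U : set X | set0 U} => match (proj2_sig u : False) with end).
    by move=> [? []].
  + move=> [f _]. have [k] := k_inhabited (proj1 HK). by case: (f k) => U [].
Qed.
Let x0 : X := proj1_sig (cid X_inh).

Definition istep (b : K) (rec : forall c : K, ord_lt c b -> X) : X :=
  match pselect (exists x, forall c (h : ord_lt c b), ~ Rr (rec c h) x) with
  | left H => proj1_sig (cid H)
  | right _ => x0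
  end.

Definition iota : K -> X := Fix (@ord_wf K) (fun _ => X) istep.

Lemma iota_eq b : iota b = @istep b (fun c _ => iota c).
Proof.
rewrite /iota Fix_eq //. move=> x f g Hfg.
have -> : f = g; last by [].
apply: functional_extensionality_dep => c. apply: functional_extensionality_dep => h.
exact: Hfg.
Qed.

Lemma iota_sep b : forall c, ord_lt c b -> ~ Rr (iota c) (iota b).
Proof.
have Hex : exists x, forall c (h : ord_lt c b), ~ Rr (iota c) x.
  apply: NNPP => Hn.
  have Hall : forall x, exists c, ord_lt c b /\ Rr (iota c) x.
    move=> x. apply: NNPP => H1. apply: Hn. exists x => c h H2. apply: H1. by exists c.
  pose D := fun U => exists c, ord_lt c b /\ U = pickU (iota c).
  apply: (HCn (D := D)).
  - move=> U [c [_ ->]]. exact: pickC.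
  - move=> x. have [c [hc Hc]] := Hall x. exists (pickU (iota c)); split.
    + by exists c.
    + exact: pickR.
  - have Hle : Defs.card_le {U | D U} {c | ord_lt c b}.
      exists (fun u : {U | D U} => exist (fun c => ord_lt c b)
         (proj1_sig (cid (proj2_sig u))) (proj1 (proj2_sig (cid (proj2_sig u))))).
      move=> u1 u2 E. apply: sig_eqP.
      rewrite (proj2 (proj2_sig (cid (proj2_sig u1)))) (proj2 (proj2_sig (cid (proj2_sig u2)))).
      have := f_equal (@proj1_sig _ _) E. by move=> /= ->.
    have [H1 H2] := @ord_initial K b.
    split; first exact: card_le_trans Hle H1.
    move=> H3. exact: H2 (card_le_trans H3 Hle).
move=> c hcb. rewrite (iota_eq b) /istep.
case: pselect => [H|H]; last by case: H.
exact: (proj2_sig (cid H)) c hcb.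
Qed.

Lemma tag_uniq b b' x : Rr (iota b) x -> Rr (iota b') x -> b = b'.
Proof.
move=> H1 H2. have H3 : Rr (iota b) (iota b') := Rr_trans H1 (Rr_sym H2).
case: (ord_total b b') => [H|[//|H]].
- by case: (iota_sep H H3).
- by case: (iota_sep H (Rr_sym H3)).
Qed.

Definition big a x := exists b, ord_lt a b /\ Rr (iota b) x.

Lemma big_R a x y : Rr x y -> big a x -> big a y.
Proof. move=> H [b [hb Hb]]. exists b; split => //. exact: Rr_trans Hb H. Qed.

Lemma big_mono a a' x : ord_lt a' a -> big a x -> big a' x.
Proof. move=> H [b [hb Hb]]. exists b; split => //. exact: ord_trans H hb. Qed.

Lemma nobig x a0 : exists c, kle a0 c /\ ~ big c x.
Proof.
case: (classic (exists b0, Rr (iota b0) x)) => [[b0 Hb0]|Hn].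
- have [c [h1 h2]] := k_max2 a0 b0. exists c; split => // [[b [hb Hb]]].
  have E := tag_uniq Hb Hb0. subst b. exact: k_irr (k_le_lt_trans h2 hb).
- exists a0; split; first by right. move=> [b [_ Hb]]. apply: Hn. by exists b.
Qed.

Definition cl' a x y := (Rr x y /\ cl a x y) \/ (big a x /\ big a y).

Lemma lvl_cl' : lvl cl'.
Proof.
constructor.
- move=> a x. left; split; [exact: Rr_refl|exact (lv_refl Hl _ _)].
- move=> a x y [[H1 H2]|[H1 H2]].
  + left; split; [exact: Rr_sym|exact (lv_sym Hl H2)].
  + by right.
- move=> a x y z [[H1 H2]|[H1 H2]] [[H3 H4]|[H3 H4]].
  + left; split; [exact: Rr_trans H1 H3|exact (lv_trans Hl H2 H4)].
  + right; split => //. exact: big_R (Rr_sym H1) H3.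
  + right; split => //. exact: big_R H3 H2.
  + by right.
- move=> a b x y Hab [[H1 H2]|[H1 H2]].
  + left; split => //. exact (lv_mono Hl Hab H2).
  + right; split; exact: big_mono Hab _.
- move=> x y Hxy.
  case: (classic (Rr x y)) => HR.
  + have [a0 Ha0] := lv_sep Hl Hxy. have [c [hc Hc]] := nobig x a0.
    exists c => [[[_ H]|[H _]]] //. exact: Ha0 (lv_mono_le Hl hc H).
  + have [c [_ Hc]] := nobig x (ax x). exists c => [[[H _]|[H _]]] //.
- move=> U. split.
  + move=> oU x Ux. have [a0 Ha0] := (proj1 (lv_top Hl U) oU) x Ux.
    have [c [hc Hc]] := nobig x a0. exists c => y [[_ H]|[H _]] //.
    exact: Ha0 (lv_mono_le Hl hc H).
  + move=> HU. apply/(lv_top Hl) => x Ux. have [a Ha] := HU x Ux.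
    have [c [h1 h2]] := k_max2 a (ax x). exists c => y Hy. apply: Ha. left; split.
    * exact (lv_mono_le Hl h2 Hy).
    * exact (lv_mono_le Hl h1 Hy).
Qed.

Lemma tails_cl' a b c : ord_lt a b -> ord_lt a c -> cl' a (iota b) (iota c).
Proof. move=> hb hc. right; split; [exists b|exists c]; split => //; exact: Rr_refl. Qed.

Lemma nonconv x : exists U : set X, open U /\ U x /\
  forall a, exists b, ord_lt a b /\ ~ U (iota b).
Proof.
exists [set y | Rr x y]; split; first exact: lv_ball_open Hl _ _.
split; first exact: Rr_refl.
move=> a. have [b1 h1] := k_nomax HK a. have [b2 h2] := k_nomax HK b1.
case: (classic (Rr x (iota b1))) => H1.
- exists b2; split; first exact: ord_trans h1 h2.
  move=> /= H2. apply: (iota_sep h2). exact: Rr_trans (Rr_sym H1) H2.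
- by exists b1.
Qed.
End NotFC.

Lemma not_fc_lvl (X : topologicalType) (K : cardinal) (cl : K -> X -> X -> Prop) :
  regular_card K -> lvl cl -> ~ finally_compact X K ->
  exists (cl' : K -> X -> X -> Prop) (p : K -> X), lvl cl' /\
   (forall a b c, ord_lt a b -> ord_lt a c -> cl' a (p b) (p c)) /\
   (forall x, exists U : set X, open U /\ U x /\ forall a, exists b, ord_lt a b /\ ~ U (p b)).
Proof.
move=> HK Hl Hfc.
have [C [HCo [HCc HCn]]] : exists C : set (set X), (forall U, C U -> open U) /\
   (forall x, exists U, C U /\ U x) /\
   (forall D : set (set X), D `<=` C -> (forall x, exists U, D U /\ U x) ->
      ~ Defs.card_lt {U : set X | D U} K).
  apply: NNPP => Hn. apply: Hfc => C HCo HCc. apply: NNPP => H2. apply: Hn.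
  exists C; split => //; split => // D HD Hcov Hcard. apply: H2. by exists D.
exists (cl' Hl HK HCo HCc HCn), (iota Hl HK HCo HCc HCn); split; [|split].
- exact: lvl_cl'.
- move=> a b c; exact: tails_cl'.
- exact: nonconv.
Qed.
Section Dist.
Variables (X : topologicalType) (K : cardinal) (cl : K -> X -> X -> Prop).
Hypothesis Hl : lvl cl.
Variables (T : Type) (lt : T -> T -> Prop) (bot : T) (v : K -> T).
Hypothesis lt_irr : forall a, ~ lt a a.
Hypothesis lt_tr : forall a b c, lt a b -> lt b c -> lt a c.
Hypothesis lt_tot : forall a b, lt a b \/ a = b \/ lt b a.
Hypothesis v_pos : forall a, lt bot (v a).
Hypothesis v_dec : forall a b, ord_lt a b -> lt (v b) (v a).

Definition dist x y : T :=
  match pselect (x = y) with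
  | left _ => bot
  | right H => v (proj1_sig (cid (wf_min (lv_sep Hl H))))
  end.

Lemma dist_eq x : dist x x = bot.
Proof. rewrite /dist; case: pselect => // H; by case: H. Qed.

Lemma dist_neq x y : x <> y -> exists b, dist x y = v b /\ ~ cl b x y /\
   forall c, ~ cl c x y -> ~ ord_lt c b.
Proof.
move=> H. rewrite /dist; case: pselect => // H'.
set w := cid _. exists (proj1_sig w); split => //. exact: proj2_sig w.
Qed.

Lemma dist_lt a x y : lt (dist x y) (v a) <-> cl a x y.
Proof.
case: (classic (x = y)) => [<-|H].
- rewrite dist_eq. split => _; [exact (lv_refl Hl _ _)|exact: v_pos].
- have [b [-> [Hb Hmin]]] := dist_neq H. split.
  + move=> Hlt. apply: NNPP => Hn. have := Hmin a Hn.
    case: (ord_total a b) => [//|[E|E]] _.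
    * subst; exact: lt_irr Hlt.
    * exact: lt_irr (lt_tr Hlt (v_dec E)).
  + move=> Hc. case: (ord_total a b) => [E|[E|E]].
    * exact: v_dec E.
    * subst; by case: Hb.
    * case: Hb. exact (lv_mono Hl E Hc).
Qed.

Definition tle a b := lt a b \/ a = b.

Lemma dist_ge x y : tle bot (dist x y).
Proof.
case: (classic (x = y)) => [<-|H]; first by rewrite dist_eq; right.
have [b [-> _]] := dist_neq H. left; exact: v_pos.
Qed.

Lemma dist_bot x y : dist x y = bot <-> x = y.
Proof.
split; last by move=> <-; exact: dist_eq.
move=> E. apply: NNPP => H. have [b [E' _]] := dist_neq H.
rewrite E' in E. have := v_pos b. rewrite E. exact: lt_irr.
Qed.

Lemma dist_sym x y : dist x y = dist y x.
Proof.
case: (classic (x = y)) => [<-//|H].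
have H' : y <> x by move=> E; apply: H.
have [b [E1 [Hb1 Hm1]]] := dist_neq H. have [c [E2 [Hb2 Hm2]]] := dist_neq H'.
rewrite E1 E2. have Hb2' : ~ cl c x y by move=> Hc; apply: Hb2; exact (lv_sym Hl Hc).
have Hb1' : ~ cl b y x by move=> Hc; apply: Hb1; exact (lv_sym Hl Hc).
case: (ord_total b c) => [E|[->//|E]].
- by case: (Hm2 b Hb1').
- by case: (Hm1 c Hb2').
Qed.

Lemma dist_ult x y z : tle (dist x y) (dist x z) \/ tle (dist x y) (dist z y).
Proof.
case: (classic (x = y)) => [<-|H].
- rewrite dist_eq. left; exact: dist_ge.
- apply: NNPP => Hn.
  have H1 : lt (dist x z) (dist x y).
    case: (lt_tot (dist x z) (dist x y)) => [//|[E|E]]; case: Hn; left; [right|left] => //.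
  have H2 : lt (dist z y) (dist x y).
    case: (lt_tot (dist z y) (dist x y)) => [//|[E|E]]; case: Hn; right; [right|left] => //.
  have [b [Eb [Hb _]]] := dist_neq H. rewrite Eb in H1 H2.
  apply: Hb. apply (lv_trans Hl (y:=z)); exact/dist_lt.
Qed.
End Dist.
Lemma lvl_Gmet (X : topologicalType) (K : cardinal) (cl : K -> X -> X -> Prop) (G : loag) :
  regular_card K -> lvl cl -> in_G_kappa G K ->
  exists d : X -> X -> G, in_Met d /\
    (forall e, lg_lt (lg_zero G) e -> exists a, forall x y, cl a x y -> lg_lt (d x y) e).
Proof.
move=> HK Hl HG. have [g [gpos [gdec gcoi]]] := G_family HK HG.
have vdec : forall a b, ord_lt a b -> lg_lt (g b) (g a).
  move=> a b H. have := gdec a b H 1%N erefl. by rewrite nmul1.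
have gco : forall e, lg_lt (lg_zero G) e -> exists a, lg_lt (g a) e.
  move=> e he. have [a Ha] := gcoi e he. exists a. have := Ha 1%N erefl. by rewrite nmul1.
have Hirr := @lg_irr G. have Htr := @lg_trans G. have Htot := @lg_total G.
have dlt := dist_lt Hl Hirr Htr gpos vdec.
have dult := dist_ult Hl Hirr Htr Htot gpos vdec.
have dbot := dist_bot Hl Hirr gpos.
have dge : forall x y, lg_le (lg_zero G) (dist Hl (lg_zero G) g x y).
  move=> x y. exact: (dist_ge Hl (lt := @lg_lt G) gpos).
exists (dist Hl (lg_zero G) g); split; [split; [split; [|split; [|split]]|]|].
- exact: dbot.
- exact: dge.
- move=> x y. exact: dist_sym.
- move=> x y z. case: (dult x y z) => H.
  + exact: gle_trans H (gle_addr_nonneg _ (dge z y)).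
  + exact: gle_trans H (gle_addl_nonneg _ (dge x z)).
- move=> U. rewrite (lv_top Hl U). split.
  + move=> H x Ux. have [a Ha] := H x Ux. exists x, (g a); split => //; split.
    * rewrite (proj2 (dbot x x) erefl). exact: gpos.
    * move=> y Hy. apply: Ha. exact/dlt.
  + move=> H x Ux. have [c [e [he [hcx hb]]]] := H x Ux. have [a Ha] := gco e he.
    exists a => y Hy. apply: hb. case: (dult c y x) => Hc.
    * exact: gle_lt_trans Hc hcx.
    * apply: gle_lt_trans Hc _. exact (lg_trans (proj2 (dlt a x y) Hy) Ha).
- move=> e he. have [a Ha] := gco e he. exists a => x y Hxy.
  exact (lg_trans (proj2 (dlt a x y) Hxy) Ha).
Qed.

Lemma lvl_Ult (X : topologicalType) (K : cardinal) (cl : K -> X -> X -> Prop) (S : bls) :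
  lvl cl -> in_F_kappa S K ->
  exists d : X -> X -> S, in_Ult d /\
    (forall e, e <> bs_bot S -> exists a, forall x y, cl a x y -> bs_lt (d x y) e).
Proof.
move=> Hl HS. have [s [s0 [sdec scoi]]] := S_family HS.
have spos : forall a, bs_lt (bs_bot S) (s a) by move=> a; exact: bs_bot_lt.
have Hirr := @bs_irr S. have Htr := @bs_trans S. have Htot := @bs_total S.
have dlt := dist_lt Hl Hirr Htr spos sdec.
have dult := dist_ult Hl Hirr Htr Htot spos sdec.
have dbot := dist_bot Hl Hirr spos.
exists (dist Hl (bs_bot S) s); split; [split; [split; [|split]|]|].
- exact: dbot.
- move=> x y. exact: dist_sym.
- move=> x y z. exact: dult.
- move=> U. rewrite (lv_top Hl U). split.
  + move=> H x Ux. have [a Ha] := H x Ux. exists x, (s a); split => //; split.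
    * rewrite (proj2 (dbot x x) erefl). exact: spos.
    * move=> y Hy. apply: Ha. exact/dlt.
  + move=> H x Ux. have [c [e [he [hcx hb]]]] := H x Ux. have [a Ha] := scoi e he.
    exists a => y Hy. apply: hb. case: (dult c y x) => Hc.
    * exact: bs_le_lt_trans Hc hcx.
    * apply: bs_le_lt_trans Hc _. exact: bs_lt_le_trans (proj2 (dlt a x y) Hy) Ha.
- move=> e he. have [a Ha] := scoi e he. exists a => x y Hxy.
  exact: bs_lt_le_trans (proj2 (dlt a x y) Hxy) Ha.
Qed.

Lemma tails_bad (X : topologicalType) (K : cardinal) (cl : K -> X -> X -> Prop) (p : K -> X) :
  regular_card K ->
  (forall a b c, ord_lt a b -> ord_lt a c -> cl a (p b) (p c)) ->
  (forall x, exists U : set X, open U /\ U x /\ forall a, exists b, ord_lt a b /\ ~ U (p b)) ->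
  exists F : set_system X, ProperFilter F /\
    (forall a, exists A, F A /\ forall x y, A x -> A y -> cl a x y) /\
    ~ exists x : X, F --> x.
Proof.
move=> HK Ht Hnc.
pose F := fun A : set X => exists a, forall b, ord_lt a b -> A (p b).
have FF : Filter F.
  constructor.
  - have [k] := k_inhabited (proj1 HK). by exists k.
  - move=> A B [a1 H1] [a2 H2]. have [c [h1 h2]] := k_max2 a1 a2.
    exists c => b hb; split; [apply: H1|apply: H2]; exact: k_le_lt_trans _ hb.
  - move=> A B AB [a H]. exists a => b hb. apply: AB. exact: H.
have PF : ProperFilter F.
  constructor => //. move=> [a H]. have [b hb] := k_nomax HK a. exact: H b hb.
exists F; split => //; split.
- move=> a. exists [set y | exists b, ord_lt a b /\ y = p b]; split.
  + exists a => b hb. by exists b.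
  + move=> x y [b [hb ->]] [c [hc ->]]. exact: Ht.
- move=> [x Hx]. have [U [oU [Ux HU]]] := Hnc x.
  have : F U. apply: Hx. apply: open_nbhs_nbhs. by split.
  move=> [a Ha]. have [b [hb Hb]] := HU a. exact: Hb (Ha b hb).
Qed.

Section OptK.
Variable K : cardinal.
Definition optK_lt (a b : option K) : Prop :=
  match a, b with
  | None, Some _ => True
  | Some x, Some y => ord_lt y x
  | _, _ => False
  end.
Lemma optK_irr a : ~ optK_lt a a.
Proof. case: a => [x|] //=. exact: k_irr. Qed.
Lemma optK_trans a b c : optK_lt a b -> optK_lt b c -> optK_lt a c.
Proof. case: a => [x|]; case: b => [y|]; case: c => [z|] //=. move=> H1 H2; exact: ord_trans H2 H1. Qed.
Lemma optK_total a b : optK_lt a b \/ a = b \/ optK_lt b a.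
Proof.
case: a => [x|]; case: b => [y|] /=; try by [left|right;left|right;right].
case: (ord_total x y) => [H|[->|H]]; [right;right|right;left|left] => //.
Qed.
Lemma optK_least a : optK_lt None a \/ None = a.
Proof. case: a => [x|]; by [left|right]. Qed.
Definition optK_bls : bls := BLS optK_irr optK_trans optK_total optK_least.

Lemma optK_F : regular_card K -> in_F_kappa optK_bls K.
Proof.
move=> HK. split; first exact: k_inhabited (proj1 HK).
split.
- exists (fun a => Some a); split; [|split].
  + by [].
  + move=> a b H /=. exact: H.
  + move=> [t|] // _. exists t; by right.
- move=> L _ [Hle Hnle] [s [s0 [sdec scoi]]].
  pose A := fun b : K => exists l, s l = Some b.
  have Hcof : forall a : K, exists b, A b /\ (ord_lt a b \/ a = b).
    move=> a. have [l Hl] := scoi (Some a) ltac:(by []).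
    case E: (s l) Hl => [b|] Hl; last by case: (s0 l).
    exists b; split; first by exists l.
    case: Hl => [H|[<-]]; [by left|by right].
  have H1 := (proj2 HK) _ Hcof.
  have H2 : Defs.card_le {b | A b} L.
    exists (fun b : {b | A b} => proj1_sig (cid (proj2_sig b))) => b1 b2 E.
    apply: sig_eqP. have E1 := proj2_sig (cid (proj2_sig b1)).
    have E2 := proj2_sig (cid (proj2_sig b2)). simpl in E1, E2.
    rewrite E in E1. rewrite E1 in E2. by case: E2.
  exact: Hnle (card_le_trans H1 H2).
Qed.
End OptK.
Theorem theorem1p15 (X : topologicalType) (K : cardinal) :
  has_infinite_gauge X -> regular_card K -> in_MG X K ->
  let P1 := finally_compact X K in
  let P2 := exists G : loag, in_G_kappa G K /\
              forall d : X -> X -> G, in_Met d -> Gcomplete d in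
  let P3 := forall G : loag, in_G_kappa G K ->
              forall d : X -> X -> G, in_Met d -> Gcomplete d in
  let P4 := exists S : bls, in_F_kappa S K /\
              forall d : X -> X -> S, in_Ult d -> ucomplete d in
  let P5 := forall S : bls, in_F_kappa S K ->
              forall d : X -> X -> S, in_Ult d -> ucomplete d in
  (P1 <-> P2) /\ (P1 <-> P3) /\ (P1 <-> P4) /\ (P1 <-> P5).
Proof.
move=> _ HK [G0 [HG0 [d0 Hd0]]] P1 P2 P3 P4 P5.
have [cl0 [Hl0 _]] := Gmet_lvl HK HG0 Hd0.
have H13 : P1 -> P3.
  move=> H1 G HG d Hd F PF HC. have [cl [Hl Hs]] := Gmet_lvl HK HG Hd.
  apply: (complete_lvl Hl HK H1 PF) => a. have [e [he He]] := Hs a.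
  have [A [FA HA]] := HC e he. exists A; split => // x y Ax Ay. apply: He. exact: HA.
have H15 : P1 -> P5.
  move=> H1 S HS d Hd F PF HC. have [cl [Hl Hs]] := Ult_lvl HK HS Hd.
  apply: (complete_lvl Hl HK H1 PF) => a. have [e [he He]] := Hs a.
  have [A [FA HA]] := HC e he. exists A; split => // x y Ax Ay. apply: He. exact: HA.
have H32 : P3 -> P2 by move=> H3; exists G0; split => //; exact: H3.
have H54 : P5 -> P4 by move=> H5; exists (optK_bls K); split; [exact: optK_F|exact: H5 (optK_F HK)].
have H21 : P2 -> P1.
  move=> [G [HG Hall]]. apply: NNPP => Hnfc.
  have [cl' [p [Hl' [Ht Hnc]]]] := not_fc_lvl HK Hl0 Hnfc.
  have [d [Hd Hsm]] := lvl_Gmet HK Hl' HG.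
  have [F [PF [HC Hncv]]] := tails_bad HK Ht Hnc.
  apply: Hncv. apply: (Hall d Hd F PF) => e he. have [a Ha] := Hsm e he.
  have [A [FA HA]] := HC a. exists A; split => // x y Ax Ay. apply: Ha. exact: HA.
have H41 : P4 -> P1.
  move=> [S [HS Hall]]. apply: NNPP => Hnfc.
  have [cl' [p [Hl' [Ht Hnc]]]] := not_fc_lvl HK Hl0 Hnfc.
  have [d [Hd Hsm]] := lvl_Ult Hl' HS.
  have [F [PF [HC Hncv]]] := tails_bad HK Ht Hnc.
  apply: Hncv. apply: (Hall d Hd F PF) => e he. have [a Ha] := Hsm e he.
  have [A [FA HA]] := HC a. exists A; split => // x y Ax Ay. apply: Ha. exact: HA.
split; [|split; [|split]]; split; auto.
Qed.
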